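(* Fix a baseline $\mathbf{x}'\in\mathbb{R}^d$. Consider the Baseline Shapley (Bshap) value function $v^B_{\mathbf{x},f,p}(S)=f(\mathbf{x}_S;\mathbf{x}'_{\bar S})$ and the Conditional Expectation (CES) value function $v^C_{\mathbf{x},f,p}(S)=\mathbb{E}_{\mathbf{x}''_{\bar S}\sim p(\mathbf{x}''_{\bar S}\mid \mathbf{x}_S)}[f(\mathbf{x}_S;\mathbf{x}''_{\bar S})]$. For no finite $T$ is Bshap strong $T$-robust to off-manifold perturbations, and for no finite $T$ is CES strong $T$-robust to off-manifold perturbations.
   Context: Here $f:\mathbb{R}^d\to\mathbb{R}$ is a model, $p$ is a probability density on $\mathbb{R}^d$, $\mathbf{x}\in\mathbb{R}^d$ is the explicand, $S\subseteq[d]$, $\bar S=[d]\setminus S$, and $(\mathbf{x}_S;\mathbf{z}_{\bar S})$ denotes the vector whose coordinates in $S$ are those of $\mathbf{x}$ and whose coordinates in $\bar S$ are those of $\mathbf{z}$. A value function $v_{\mathbf{x},f,p}(S)$ is called strong $T$-robust to off-manifold perturbations if for any two models $f_1,f_2$ and any probability measure $p$, the condition $\max_{\mathbf{z}}|f_1(\mathbf{z})-f_2(\mathbf{z})|\,p(\mathbf{z})\le\epsilon$ always entails $|v_{\mathbf{x},f_1,p}(S)-v_{\mathbf{x},f_2,p}(S)|\le T\epsilon$ for every $\mathbf{x}$ and every $S$. *)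

(* Defs.v *)
From HB Require Import structures.
From mathcomp Require Import all_boot all_order all_algebra.
From mathcomp Require Import all_classical all_reals all_analysis.

Set Implicit Arguments.
Unset Strict Implicit.
Unset Printing Implicit Defensive.

Import Order.TTheory GRing.Theory Num.Theory.
Local Open Scope classical_set_scope.
Local Open Scope ring_scope.

(* Points of R^d are d-tuples of reals; d.-tuple R carries the product
   (coordinate-generated) sigma-algebra of the library. *)

Section Defs.
Variable R : realType.
Variable d : nat.
Local Notation pt := (d.-tuple R).

Definition splice (x y : pt) (S : {set 'I_d}) : pt :=
  [tuple if j \in S then tnth x j else tnth y j | j < d].

Definition upd (z : pt) (i : 'I_d) (t : R) : pt :=
  [tuple if j == i then t else tnth z j | j < d].

Fixpoint iint (l : seq 'I_d) (g : pt -> \bar R) (z : pt) : \bar R :=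
  match l with
  | [::] => g z
  | i :: l' => (\int[lebesgue_measure]_(t in [set: R]) iint l' g (upd z i t))%E
  end.

Definition is_density (p : pt -> R) : Prop :=
  [/\ measurable_fun [set: pt] p,
      (forall z, 0 <= p z) &
      (forall z0, iint (enum 'I_d) (fun z => (p z)%:E) z0 = 1%E)].

Definition value_fun := pt -> (pt -> R) -> (pt -> R) -> {set 'I_d} -> R.

Definition bshap (x' : pt) : value_fun := fun x f p S => f (splice x x' S).

(* Conditional expectation: 
   E_{x''_{\bar S} ~ p(. | x_S)} f(x_S ; x''_{\bar S})
   = (\int f(x_S;y) p(x_S;y) dy) / (\int p(x_S;y) dy),
   integrals over the coordinates in \bar S. *)
Definition ces : value_fun := fun x f p S =>
  fine (iint (enum (~: S)) (fun z => (f z * p z)%:E) x) /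
  fine (iint (enum (~: S)) (fun z => (p z)%:E) x).

Definition strong_robust (v : value_fun) (T : R) : Prop :=
  forall (f1 f2 p : pt -> R) (eps : R),
    measurable_fun [set: pt] f1 -> measurable_fun [set: pt] f2 ->
    is_density p ->
    (forall z, `|f1 z - f2 z| * p z <= eps) ->
    forall (x : pt) (S : {set 'I_d}), `|v x f1 p S - v x f2 p S| <= T * eps.

End Defs.

(* Main.v *)
Require Import Defs.
From HB Require Import structures.
From mathcomp Require Import all_boot all_order all_algebra.
From mathcomp Require Import all_classical all_reals all_analysis.
Import Order.TTheory GRing.Theory Num.Theory.
Local Open Scope ring_scope.
Set Implicit Arguments.
Unset Strict Implicit.
Local Open Scope classical_set_scope.

Definition hk (R : realType) (k : R) (t : R) : R :=
  k^-1 * \1_(`[0, k]%classic) t.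

Definition pk (R : realType) (d : nat) (k : R) (z : d.-tuple R) : R :=
  \prod_(j < d) hk k (tnth z j).

Lemma hk_ge0 (R : realType) (k : R) t : 0 < k -> 0 <= hk k t.
Proof.
move=> k0; rewrite /hk mulr_ge0 // ?invr_ge0 ?ltW //.
Qed.

Lemma hk_mes (R : realType) (k : R) : measurable_fun setT (hk k).
Proof.
apply: measurable_realfun.measurable_funM; first exact: measurable_cst.
by apply: measurable_realfun.measurable_indic.
Qed.

Lemma int_hk (R : realType) (k : R) : 0 < k ->
  (\int[lebesgue_measure]_(t in [set: R]) (hk k t)%:E = 1)%E.
Proof.
move=> k0; rewrite /hk.
under eq_integral do rewrite EFinM.
rewrite ge0_integralZl_EFin //; try (by rewrite invr_ge0 ltW);
  try (by apply/measurable_realfun.measurable_EFinP; apply: measurable_realfun.measurable_indic);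
  try (by move=> t _; rewrite lee_fin /indic; case: (_ \in _)).
rewrite integral_indic // setIT.
rewrite [X in (_ * X)%E](_ : _ = k%:E).
  by rewrite -EFinM mulVf ?gt_eqF.
have := (@lebesgue_measure_itv R `[0, k]%R).
rewrite /= ifT; last by rewrite lte_fin.
by rewrite sube0 => <-.
Qed.

Lemma tnth_upd (R : realType) (d : nat) (z : d.-tuple R) i t j :
  tnth (upd z i t) j = if j == i then t else tnth z j.
Proof. by rewrite /upd tnth_mktuple. Qed.

Lemma iint_pk (R : realType) (d : nat) (k : R) : 0 < k ->
  forall (l : seq 'I_d), uniq l -> forall z,
  iint l (fun z => (pk k z)%:E) z =
  (\prod_(j < d | j \notin l) hk k (tnth z j))%:E.
Proof.
move=> k0; elim=> [|i l IH] /=.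
  by move=> _ z; rewrite /pk.
move=> /andP[il ul] z.
under eq_integral do rewrite IH //.
have E : forall t, \prod_(j < d | j \notin l) hk k (tnth (upd z i t) j) =
   (\prod_(j < d | j \notin i :: l) hk k (tnth z j)) * hk k t.
  move=> t; rewrite (bigD1 i) //= mulrC tnth_upd eqxx; congr (_ * _).
  apply: eq_big => j; first by rewrite in_cons negb_or andbC.
  by move=> /andP[_ ji]; rewrite tnth_upd (negbTE ji).
under eq_integral do rewrite E EFinM.
rewrite ge0_integralZl_EFin //; last 3 first.
- by move=> t _; rewrite lee_fin hk_ge0.
- by apply/measurable_realfun.measurable_EFinP; apply: hk_mes.
- by apply: prodr_ge0 => j _; apply: hk_ge0.
by rewrite int_hk // mule1.
Qed.

Lemma pk_density (R : realType) (d : nat) (k : R) : 0 < k -> is_density (@pk R d k).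
Proof.
move=> k0; split.
- rewrite /pk.
  apply: measurable_prod => j _.
  apply: measurableT_comp; first exact: hk_mes.
  exact: measurable_tnth.
- by move=> z; apply: prodr_ge0 => j _; apply: hk_ge0.
- move=> z0; rewrite iint_pk // ?enum_uniq //.
  by rewrite big_pred0 // => j; rewrite mem_enum.
Qed.
Lemma pk_le (R : realType) (d : nat) (k : R) z : 0 < k ->
  @pk R d k z <= k^-1 ^+ d.
Proof.
move=> k0; rewrite /pk.
have -> : k^-1 ^+ d = \prod_(j < d) k^-1 by rewrite prodr_const card_ord.
apply: ler_prod => j _; rewrite hk_ge0 //= /hk /indic.
by case: (_ \in _); rewrite ?mulr1 ?mulr0 // invr_ge0 ltW.
Qed.

Lemma pk_gt0 (R : realType) (d : nat) (k : R) : 0 < k ->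
  0 < @pk R d k [tuple 0 | _ < d].
Proof.
move=> k0; apply: prodr_gt0 => j _; rewrite /hk tnth_mktuple.
rewrite indicE mem_set ?mulr1 ?invr_gt0 //=.
by rewrite in_itv /= lexx ltW.
Qed.

Lemma choose_k (R : realType) (d : nat) (T : R) : (0 < d)%N ->
  exists k : R, 0 < k /\ T * (k^-1 ^+ d) < 1.
Proof.
move=> d0; exists (`|T| + 1); split; first by rewrite ltr_pwDr.
have kp : 0 < `|T| + 1 by rewrite ltr_pwDr.
set e := (`|T| + 1)^-1.
have e0 : 0 < e by rewrite invr_gt0.
have e1 : e <= 1 by rewrite invf_le1 // lerDr.
have ed : e ^+ d <= e.
  case: d d0 => // n _; rewrite exprS -[leRHS]mulr1.
  by apply: ler_wpM2l; [exact: ltW | rewrite exprn_ile1 // ltW].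
have ed0 : 0 <= e ^+ d by rewrite exprn_ge0 // ltW.
apply: (le_lt_trans (ler_wpM2r ed0 (ler_norm T))).
apply: (le_lt_trans (ler_wpM2l (normr_ge0 T) ed)).
rewrite /e -[ltRHS](divff (lt0r_neq0 kp)) ltr_pM2r ?invr_gt0 //.
by rewrite ltrDl.
Qed.

Theorem proposition2 (R : realType) (d : nat) (x' : d.-tuple R) :
  (0 < d)%N ->
  (forall T : R, ~ strong_robust (bshap x') T) /\
  (forall T : R, ~ strong_robust (@ces R d) T).
Proof.
move=> d0.
have bnd : forall k : R, 0 < k -> forall z,
    `|(fun _ : d.-tuple R => 1) z - (fun _ => 0) z| * @pk R d k z <= k^-1 ^+ d.
  by move=> k k0 z; rewrite subr0 normr1 mul1r pk_le.
split=> T H; have [k [k0 Tk]] := choose_k T d0.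
- have := H (fun _ => 1) (fun _ => 0) (@pk R d k) (k^-1 ^+ d)
    (measurable_cst _) (measurable_cst _) (pk_density d k0) (bnd k k0)
    x' finset.set0.
  rewrite /bshap subr0 normr1 => H1.
  by move: (le_lt_trans H1 Tk); rewrite ltxx.
- have := H (fun _ => 1) (fun _ => 0) (@pk R d k) (k^-1 ^+ d)
    (measurable_cst _) (measurable_cst _) (pk_density d k0) (bnd k k0)
    [tuple 0 | _ < d] [set: 'I_d]%SET.
  rewrite /ces finset.setCT enum_set0 /= mul1r mul0r mul0r subr0.
  rewrite divff ?gt_eqF ?pk_gt0 // normr1 => H1.
  by move: (le_lt_trans H1 Tk); rewrite ltxx.
Qed.
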